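(* Let $g$ be a positive integer, let $l\ge1$, and let $(a,a+g)$ be a consecutive prospective prime pair with gap $g$ in $S_l$. Let $k>l+2$. For $0\le m\le P_k-1$, let $\mathring{n}^g_{S_k^{(m)}}$ be the number of pairs derived from $(a,a+g)$ in $S_k$ that lie in the subset $S_k^{(m)}$, i.e. the number of tuples $(m_{l+1},\dots,m_k)$ with $0\le m_j\le P_j-1$ and $m_k=m$ such that, with $M=\sum_{j=l+1}^k m_jP_{j-1}\#$, both $a+M$ and $a+g+M$ are coprime to $P_k\#$. Then for every $0\le m\le P_k-1$, \[\mathring{n}^g_{S_k^{(m)}}\ge \mathring{n}^g_{k-2}\,(P_{k-1}-4)=(P_{k-1}-4)\prod_{i=l+1}^{k-2}(P_i-2)\cdot\prod_{\substack{i=l+1\\ P_i\mid g}}^{k-2}\frac{P_i-1}{P_i-2}.\]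
   Context: $P_k$ denotes the $k$-th prime ($P_1=2$) and $P_k\#=\prod_{i=1}^kP_i$. $S_k=\{N\in\mathbb{N}:5\le N\le 4+P_k\#\}$ and, for $0\le m\le P_k-1$, $S_k^{(m)}=\{N: 5+mP_{k-1}\#\le N\le 4+(m+1)P_{k-1}\#\}$. A prospective prime in $S_k$ is an $N\in S_k$ coprime to $P_k\#$; prospective primes $a<b$ in $S_k$ are consecutive if no integer strictly between them is coprime to $P_k\#$; a consecutive prospective prime pair with gap $g$ is a pair $(a,a+g)$ of consecutive prospective primes. For $j>l$, $\mathring{n}^g_j=\prod_{i=l+1}^{j}(P_i-2)\prod_{l+1\le i\le j,\,P_i\mid g}\frac{P_i-1}{P_i-2}$. *)

(* Defs.v *)
From HB Require Import structures.
From mathcomp Require Import all_boot all_order all_algebra.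
Set Implicit Arguments. Unset Strict Implicit. Unset Printing Implicit Defensive.
Import Order.TTheory GRing.Theory Num.Theory.

Definition nextp (n : nat) : nat :=
  ex_minn (let: exist2 p H1 H2 := prime_above n in
           ex_intro (fun p => (n < p) && prime p) p (introT andP (conj H1 H2))).

(* P k = k-th prime, 1-indexed: P 1 = 2, P 2 = 3, ...  (P 0 = 1 is a dummy) *)
Fixpoint P (k : nat) : nat :=
  match k with 0 => 1 | k'.+1 => nextp (P k') end.

Definition primorial (k : nat) : nat := \prod_(1 <= i < k.+1) P i.

Definition inS (k N : nat) : bool := (5 <= N) && (N <= 4 + primorial k).

Definition prospective (k N : nat) : bool := inS k N && coprime N (primorial k).

Definition consec_pair (k a g : nat) : Prop :=
  [/\ 0 < g, prospective k a, prospective k (a + g) &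
      forall n, a < n -> n < a + g -> ~~ coprime n (primorial k)].

(* Index i : 'I_(k-l) encodes j = l+1+i; values stored in 'I_(P k) and
   constrained by t i < P (l+1+i). *)
Definition derived_count (l k a g m : nat) : nat :=
  #|[set t : {ffun 'I_(k - l) -> 'I_(P k)} |
      [forall i : 'I_(k - l), t i < P (l + 1 + i)] &&
      [forall i : 'I_(k - l), (l + 1 + i == k) ==> (t i == m :> nat)] &&
      (let M := \sum_(i < k - l) t i * primorial (l + i) in
       coprime (a + M) (primorial k) && coprime (a + g + M) (primorial k))]|.

Definition nring (g l j : nat) : rat :=
  ((\prod_(l + 1 <= i < j.+1) ((P i)%:R - 2)) *
   (\prod_(l + 1 <= i < j.+1 | (P i %| g)%N) (((P i)%:R - 1) / ((P i)%:R - 2))))%R.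

(* Main.v *)
Require Import Defs.
From mathcomp Require Import all_boot all_order all_algebra zify.
Import Order.TTheory GRing.Theory Num.Theory.
Set Implicit Arguments. Unset Strict Implicit.

Lemma nextp_spec n : n < nextp n /\ prime (nextp n).
Proof. rewrite /nextp; case: ex_minnP => p /andP[h1 h2] _; by split. Qed.

Lemma P_lt i : P i < P i.+1.
Proof. by case: (nextp_spec (P i)). Qed.

Lemma P_prime i : 0 < i -> prime (P i).
Proof. by case: i => // i _; case: (nextp_spec (P i)). Qed.

Lemma P_mono i j : i < j -> P i < P j.
Proof.
elim: j => // j IH; rewrite ltnS leq_eqVlt => /orP[/eqP->|h]; first exact: P_lt.
exact: ltn_trans (IH h) (P_lt j).
Qed.

Lemma P_le i j : i <= j -> P i <= P j.
Proof. rewrite leq_eqVlt => /orP[/eqP->//|h]; exact: ltnW (P_mono h). Qed.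

Lemma P_ge i : i < P i.
Proof. elim: i => // i IH; exact: leq_ltn_trans IH (P_lt i). Qed.


Lemma primorialS k : primorial k.+1 = primorial k * P k.+1.
Proof. by rewrite /primorial big_nat_recr. Qed.

Lemma primorial0 : primorial 0 = 1.
Proof. by rewrite /primorial big_geq. Qed.

Lemma coprime_primorial x k :
  (forall i, 0 < i <= k -> coprime x (P i)) -> coprime x (primorial k).
Proof.
elim: k => [|k IH] H; first by rewrite primorial0 coprimen1.
rewrite primorialS coprimeMr IH ?H //; last by move=> i /andP[h1 h2]; apply: H; rewrite h1 ltnW.
by rewrite leqnn.
Qed.

Lemma coprime_primorial_inv x k i :
  coprime x (primorial k) -> 0 < i <= k -> coprime x (P i).
Proof.
elim: k => [|k IH]; first by case: i => // i; rewrite andbF.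
rewrite primorialS coprimeMr => /andP[h1 h2] /andP[hi]; rewrite leq_eqVlt => /orP[/eqP->//|h].
by apply: IH => //; rewrite hi.
Qed.

Lemma dvd_primorial i k : 0 < i <= k -> P i %| primorial k.
Proof.
elim: k => [|k IH]; first by case: i => // i; rewrite andbF.
move=> /andP[hi]; rewrite primorialS leq_eqVlt => /orP[/eqP->|h]; first exact: dvdn_mull.
by apply: dvdn_mulr; apply: IH; rewrite hi.
Qed.

Lemma coprime_primorial_P j k : j < k -> coprime (primorial j) (P k).
Proof.
elim: j => [|j IH] h; first by rewrite primorial0 coprime1n.
rewrite primorialS coprimeMl IH ?(ltnW h) //.
have k0 : 0 < k by lia.
rewrite prime_coprime ?P_prime // dvdn_prime2 ?P_prime //.
rewrite neq_ltn P_mono //; exact: leq_ltn_trans (leq0n _) h.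
Qed.

Lemma atmost1 p n (f : nat -> nat) w : prime p -> coprime w p -> n <= p ->
  (forall v, f v = f 0 + v * w) -> \sum_(v < n) (p %| f v) <= 1.
Proof.
move=> pp cw np hf.
have key : forall v1 v2, v1 < v2 -> v2 < p -> p %| f v1 -> p %| f v2 -> False.
  move=> v1 v2 h12 h2p d1 d2.
  have : p %| f v2 - f v1 by apply: dvdn_sub.
  rewrite (hf v2) (hf v1) subnDl -mulnBl Gauss_dvdl; last by rewrite coprime_sym.
  move=> /dvdn_leq; rewrite subn_gt0 h12 => /(_ isT) hle.
  have : v2 - v1 < p by apply: leq_ltn_trans (leq_subr _ _) h2p.
  by rewrite ltnNge hle.
case: (boolP [exists v : 'I_n, p %| f v]) => [/existsP[v0 hv0]|].
  rewrite (bigD1 v0) //= hv0 big1 // => v hv.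
  case: (boolP (p %| f v)) => // hd; exfalso.
  have hne : (v : nat) != v0 by apply: contra hv => /eqP e; apply/eqP/val_inj.
  case: (ltngtP v v0) => [h|h|e]; last by rewrite e eqxx in hne.
    by apply: (key v v0) => //; apply: leq_trans (ltn_ord v0) np.
  by apply: (key v0 v) => //; apply: leq_trans (ltn_ord v) np.
move=> hn; rewrite big1 // => v _.
by case: (boolP (p %| f v)) => // hd; move: hn; rewrite negb_exists => /forallP/(_ v); rewrite hd.
Qed.

Lemma count_lb n (G B : nat -> bool) : (forall v, G v || B v) ->
  n <= \sum_(v < n) G v + \sum_(v < n) B v.
Proof.
move=> h; rewrite -big_split /=.
apply: leq_trans (_ : \sum_(v < n) 1 <= _); first by rewrite sum_nat_const card_ord muln1.
by apply: leq_sum => v _; have := h v; case: (G v); case: (B v).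
Qed.

Lemma sum_or n (b1 b2 : nat -> bool) :
  \sum_(v < n) (b1 v || b2 v) <= \sum_(v < n) b1 v + \sum_(v < n) b2 v.
Proof. rewrite -big_split; apply: leq_sum => v _; by case: (b1 v); case: (b2 v). Qed.

Lemma sum_restrict N n (F : nat -> nat) (D : nat -> bool) : n <= N ->
  (forall v, v < n -> D v) -> \sum_(v < n) F v <= \sum_(v < N) D v * F v.
Proof.
move=> hn hD; rewrite (big_ord_widen N F hn) big_mkcond /=.
by apply: leq_sum => v _; case: ifP => h //; rewrite hD // mul1n.
Qed.

Lemma sum_point N m (F : nat -> nat) (D : nat -> bool) : m < N -> D m ->
  F m <= \sum_(v < N) D v * F v.
Proof.
move=> hm hD; rewrite (bigD1 (Ordinal hm)) //= hD mul1n; exact: leq_addr.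
Qed.
Definition C (N d : nat) (D : nat -> nat -> bool) (w : nat -> nat) (p : nat -> bool) : nat :=
  \sum_(t : {ffun 'I_d -> 'I_N}) ([forall i : 'I_d, D i (t i)] && p (\sum_(i < d) t i * w i)).

Lemma C0 N D w p : C N 0 D w p = p 0.
Proof.
rewrite /C.
rewrite (big_pred1 [ffun i : 'I_0 => False_rect 'I_N (Bool.diff_false_true (etrans (esym (ltn0 i)) (ltn_ord i)))]).
  by rewrite big_ord0; case: forallP => // -[] [].
by move=> f /=; symmetry; apply/eqP/ffunP => -[].
Qed.

Lemma C_ext N d D w p D' w' p' : (forall i v, D i v = D' i v) -> (forall i, w i = w' i) ->
  (forall x, p x = p' x) -> C N d D w p = C N d D' w' p'.
Proof.
move=> hD hw hp; rewrite /C; apply: eq_bigr => t _.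
rewrite hp; congr (_ && _); last by apply: congr1; apply: eq_bigr => i _; rewrite hw.
by apply: eq_forallb => i; rewrite hD.
Qed.

Definition hcons N d (v : 'I_N) (f : {ffun 'I_d -> 'I_N}) : {ffun 'I_d.+1 -> 'I_N} :=
  [ffun i => if unlift ord0 i is Some j then f j else v].

Lemma CS N d D w p : C N d.+1 D w p =
  \sum_(v < N) D 0 v * C N d (fun i => D i.+1) (fun i => w i.+1) (fun x => p (v * w 0 + x)).
Proof.
rewrite /C.
pose h (x : 'I_N * {ffun 'I_d -> 'I_N}) := hcons x.1 x.2.
pose hi (t : {ffun 'I_d.+1 -> 'I_N}) := (t ord0, [ffun j => t (lift ord0 j)]).
have hK : cancel h hi.
  move=> [v f]; rewrite /h /hi /hcons /= ffunE unlift_none; congr pair.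
  by apply/ffunP => j; rewrite !ffunE liftK.
have hiK : cancel hi h.
  move=> t; rewrite /h /hi /hcons /=; apply/ffunP => i; rewrite ffunE.
  by case: unliftP => [j ->|->]; rewrite ?ffunE.
rewrite (reindex h); last by exists hi => x _.
under [in RHS]eq_bigr => v _ do rewrite big_distrr.
rewrite pair_bigA; apply: eq_bigr => -[v f] _ /=.
have e0 : hcons v f ord0 = v by rewrite /hcons ffunE unlift_none.
have e1 : forall j, hcons v f (lift ord0 j) = f j by move=> j; rewrite /hcons ffunE liftK.
rewrite big_ord_recl e0.
rewrite /h /=.
under eq_bigr => j _ do rewrite e1.
have -> : [forall i : 'I_d.+1, D i (hcons v f i)] = D 0 v && [forall i : 'I_d, D i.+1 (f i)].
  apply/idP/idP.
  - move=> H; have {}H := @forallP _ _ H.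
    apply/andP; split; first by have := H ord0; rewrite e0.
    by apply/forallP => j; have := H (lift ord0 j); rewrite e1 lift0.
  - case/andP=> H0 H; have {}H := @forallP _ _ H.
    by apply/forallP => i; case: (unliftP ord0 i) => [j ->|->]; rewrite ?e0 ?e1 ?lift0.
under eq_bigr => j _ do rewrite /bump leq0n add1n.
by case: (D 0 v); rewrite ?mul1n ?mul0n.
Qed.

Lemma lb_from n K (G B : nat -> bool) : (forall v, G v || B v) ->
  \sum_(v < n) B v <= K -> n - K <= \sum_(v < n) G v.
Proof. move=> h hB; have := count_lb n h; lia. Qed.

Lemma sum_point' N m (F : nat -> nat) (D : nat -> bool) X : m < N -> D m ->
  X <= F m -> X <= \sum_(v < N) D v * F v.
Proof. move=> hm hD hX; exact: leq_trans hX (sum_point F hm hD). Qed.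

Lemma sum_restrict' N n (F : nat -> nat) (D : nat -> bool) X : n <= N ->
  (forall v, v < n -> D v) -> X <= \sum_(v < n) F v -> X <= \sum_(v < N) D v * F v.
Proof. move=> hn hD hX; exact: leq_trans hX (sum_restrict F hn hD). Qed.

Definition Dj (m k j : nat) := fun i v : nat => (v < P (j + i)) && ((j + i == k) ==> (v == m)).
Definition wj (j : nat) := fun i => primorial (j.-1 + i).
Definition pS (a g k S : nat) := fun x =>
  coprime (a + (S + x)) (primorial k) && coprime (a + g + (S + x)) (primorial k).
Definition goodi (a g i S : nat) := ~~ (P i %| a + S) && ~~ (P i %| a + g + S).
Definition cc (g i : nat) := if P i %| g then P i - 1 else P i - 2.

Lemma goodi_shift a g i S x : P i %| x -> goodi a g i (S + x) = goodi a g i S.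
Proof. by move=> hx; rewrite /goodi !addnA !(dvdn_addl _ hx). Qed.

Lemma pS_of a g k S x : (forall i, 0 < i <= k -> goodi a g i (S + x)) -> pS a g k S x.
Proof.
move=> h; apply/andP; split; apply: coprime_primorial => i hi;
  have /andP[h1 h2] := h i hi; rewrite coprime_sym prime_coprime ?P_prime //;
  by case/andP: hi.
Qed.

Lemma count_cc a g j S : 0 < j -> cc g j <= \sum_(v < P j) goodi a g j (S + v * wj j 0).
Proof.
move=> hj.
have hf : forall c, (fun v => c + (S + v * wj j 0)) =1
            (fun v => (fun v => c + (S + v * wj j 0)) 0 + v * wj j 0).
  by move=> c v /=; lia.
have cw : coprime (wj j 0) (P j) by apply: coprime_primorial_P; lia.
rewrite /cc; case: ifP => hg.
  apply: (lb_from (G := fun v => goodi a g j (S + v * wj j 0)) (B := fun v => P j %| a + (S + v * wj j 0))).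
    move=> v; rewrite /goodi.
    have -> : a + g + (S + v * wj j 0) = a + (S + v * wj j 0) + g by lia.
    rewrite (dvdn_addl _ hg) andbb.
    by case: (P j %| _).
  exact: (@atmost1 _ _ (fun v => a + (S + v * wj j 0)) _ (P_prime hj) cw (leqnn _) (hf a)).
apply: (lb_from (G := fun v => goodi a g j (S + v * wj j 0)) (B := fun v => (P j %| a + (S + v * wj j 0)) || (P j %| a + g + (S + v * wj j 0)))).
  by move=> v; rewrite /goodi; case: (P j %| _); case: (P j %| _).
apply: leq_trans (@sum_or (P j) (fun v => P j %| a + (S + v * wj j 0)) (fun v => P j %| a + g + (S + v * wj j 0))) _.
have := (@atmost1 _ _ (fun v => a + (S + v * wj j 0)) _ (P_prime hj) cw (leqnn _) (hf a)).
have := (@atmost1 _ _ (fun v => a + g + (S + v * wj j 0)) _ (P_prime hj) cw (leqnn _) (hf (a + g))).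
lia.
Qed.

Lemma sieve a g m k : m < P k -> forall n j S, j + n.+1 = k -> 0 < j ->
  (forall i, 0 < i < j -> goodi a g i S) ->
  (\prod_(j <= i < k.-1) cc g i) * (P k.-1 - 4) <= C (P k) n.+2 (Dj m k j) (wj j) (pS a g k S).
Proof.
move=> hm; elim=> [|n IH] j S hjk hj hS.
- have ek : k.-1 = j by lia.
  rewrite ek big_geq // mul1n CS.
  apply: (@sum_restrict' (P k) (P j) (fun v => C (P k) 1 (fun i => Dj m k j i.+1) (fun i => wj j i.+1)
            (fun x => pS a g k S (v * wj j 0 + x)))).
  + apply: P_le; lia.
  + by move=> v hv; rewrite /Dj addn0 hv /=; have -> : (j == k) = false by apply/eqP; lia.
  apply: (@leq_trans (\sum_(v < P j) pS a g k S (v * wj j 0 + (m * wj j 1 + 0)))); last first.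
    apply: leq_sum => v _; rewrite CS.
    apply: (@sum_point' (P k) m (fun v' => C (P k) 0 (fun i => Dj m k j i.+2) (fun i => wj j i.+2)
       (fun x => pS a g k S (v * wj j 0 + (v' * wj j 1 + x))))) => //.
      by rewrite /Dj /= hjk hm !eqxx.
    by rewrite C0.
  have cw0 : coprime (wj j 0) (P j) by apply: coprime_primorial_P; lia.
  have cwk : coprime (wj j 0) (P k) by apply: coprime_primorial_P; lia.
  pose X := fun v => a + (S + (v * wj j 0 + (m * wj j 1 + 0))).
  pose Y := fun v => a + g + (S + (v * wj j 0 + (m * wj j 1 + 0))).
  have hX : forall v, X v = X 0 + v * wj j 0 by move=> v; rewrite /X; lia.
  have hY : forall v, Y v = Y 0 + v * wj j 0 by move=> v; rewrite /Y; lia.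
  apply: (lb_from (G := fun v => pS a g k S (v * wj j 0 + (m * wj j 1 + 0)))
     (B := fun v => ((P j %| X v) || (P j %| Y v)) || ((P k %| X v) || (P k %| Y v)))).
    move=> v; case: (boolP (((P j %| X v) || (P j %| Y v)) || ((P k %| X v) || (P k %| Y v)))) => [_|];
      first by rewrite orbT.
    rewrite !negb_or => /andP[/andP[n1 n2] /andP[n3 n4]]; rewrite orbF.
    apply: pS_of => i /andP[i0 ik].
    have [hij|hij|->] := ltngtP i j.
    * rewrite goodi_shift; first by apply: hS; rewrite i0 hij.
      rewrite addn0; apply: dvdn_add; apply: dvdn_mull; rewrite /wj; apply: dvd_primorial; clear -i0 hij hj; lia.
    * have -> : i = k by clear -hij ik hjk; lia.
      by rewrite /goodi n3 n4.
    * by rewrite /goodi n1 n2.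
  apply: leq_trans (@sum_or (P j) (fun v => (P j %| X v) || (P j %| Y v)) (fun v => (P k %| X v) || (P k %| Y v))) _.
  apply: leq_trans (leq_add (@sum_or (P j) (fun v => (P j %| X v)) (fun v => (P j %| Y v)))
                  (@sum_or (P j) (fun v => (P k %| X v)) (fun v => (P k %| Y v)))) _.
  have pk : P j <= P k by apply: P_le; clear -hjk; lia.
  have k0 : 0 < k by clear -hjk; lia.
  rewrite -[4]/(1 + 1 + (1 + 1)).
  apply: leq_add; apply: leq_add.
  - exact: (@atmost1 _ _ X _ (P_prime hj) cw0 (leqnn _) hX).
  - exact: (@atmost1 _ _ Y _ (P_prime hj) cw0 (leqnn _) hY).
  - exact: (@atmost1 _ _ X _ (P_prime k0) cwk pk hX).
  - exact: (@atmost1 _ _ Y _ (P_prime k0) cwk pk hY).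
-
  have hjk1 : j < k.-1 by lia.
  rewrite CS (big_ltn hjk1) -mulnA.
  apply: (@sum_restrict' (P k) (P j) (fun v => C (P k) n.+2 (fun i => Dj m k j i.+1) (fun i => wj j i.+1)
            (fun x => pS a g k S (v * wj j 0 + x)))).
  + apply: P_le; lia.
  + by move=> v hv; rewrite /Dj addn0 hv /=; have -> : (j == k) = false by apply/eqP; lia.
  set B := (\prod_(j.+1 <= i < k.-1) cc g i) * (P k.-1 - 4).
  apply: (@leq_trans ((\sum_(v < P j) goodi a g j (S + v * wj j 0)) * B)).
    by apply: leq_mul => //; apply: count_cc.
  rewrite big_distrl /=; apply: leq_sum => v _.
  case: (boolP (goodi a g j (S + v * wj j 0))) => hg; last by rewrite mul0n.
  rewrite mul1n.
  rewrite (@C_ext _ _ _ _ _ (Dj m k j.+1) (wj j.+1) (pS a g k (S + v * wj j 0))).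
  + apply: IH => //; first by lia.
    move=> i /andP[i0 ij]; rewrite ltnS leq_eqVlt in ij; case/orP: ij => [/eqP->//|ij].
    rewrite goodi_shift; first by apply: hS; rewrite i0 ij.
    apply: dvdn_mull; apply: dvd_primorial; lia.
  + by move=> i w; rewrite /Dj addnS addSn.
  + move=> i; rewrite /wj; have -> : j.-1 + i.+1 = j.+1.-1 + i by clear -hj; lia.
    by [].
  + by move=> x; rewrite /pS !(addnA S).
Qed.

Lemma derived_C l k a g m : l < k ->
  derived_count l k a g m = C (P k) (k - l) (Dj m k (l + 1)) (wj (l + 1)) (pS a g k 0).
Proof.
move=> hlk; rewrite /derived_count /C -sum1_card big_mkcond /=.
apply: eq_bigr => t _; rewrite inE /=.
have -> : [forall i : 'I_(k - l), t i < P (l + 1 + i)] && [forall i : 'I_(k - l), (l + 1 + i == k) ==> (t i == m :> nat)]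
        = [forall i : 'I_(k - l), Dj m k (l + 1) i (t i)].
  apply/idP/idP.
  - case/andP=> H1 H2; have {}H1 := @forallP _ _ H1; have {}H2 := @forallP _ _ H2.
    by apply/forallP => i; rewrite /Dj H1 H2.
  - move=> H; have {}H := @forallP _ _ H.
    by apply/andP; split; apply/forallP => i; have /andP[] := H i.
have -> : \sum_(i < k - l) t i * primorial (l + i) = \sum_(i < k - l) t i * wj (l + 1) i.
  by apply: eq_bigr => i _; rewrite /wj addn1.
by rewrite /pS !add0n; case: (_ && _).
Qed.

Lemma nring_eq g l k : 1 <= l -> l + 2 < k ->
  nring g l (k - 2) = ((\prod_(l.+1 <= i < k.-1) cc g i)%:R : rat).
Proof.
move=> hl hk; rewrite /nring.
have -> : (k - 2).+1 = k.-1 by lia.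
rewrite addn1 natr_prod [X in (_ * X)%R]big_mkcond /= -big_split /=.
apply: eq_big_nat => i /andP[hi _].
have hP : 3 <= P i by have := P_ge i; lia.
have hP2 : ((P i)%:R - 2 : rat) != 0%R.
  by rewrite subr_eq0 -[2%R]/(2%:R)%R eqr_nat; apply/eqP; lia.
rewrite /cc; case: ifP => hd.
  by rewrite mulrC divfK // natrB //; lia.
by rewrite mulr1 natrB //; lia.
Qed.

Unset Implicit Arguments.
Theorem theorem2 (g l k a m : nat) :
  0 < g -> 1 <= l -> consec_pair l a g -> l + 2 < k -> m < P k ->
  (nring g l (k - 2) * ((P (k - 1))%:R - 4) <= (derived_count l k a g m)%:R)%R.
Proof.
move=> g0 l1 [_ /andP[_ ca] /andP[_ cag] _] hlk hm.
have key : (\prod_(l.+1 <= i < k.-1) cc g i) * (P k.-1 - 4) <= derived_count l k a g m.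
  rewrite derived_C; last by lia.
  have -> : k - l = (k - l - 2).+2 by lia.
  rewrite -[l.+1]addn1.
  apply: sieve => //; [by lia | by rewrite addn1 |].
  move=> i /andP[i0 il].
  have hil : 0 < i <= l by rewrite i0 /=; lia.
  have pi := P_prime i0.
  rewrite /goodi !addn0 -!prime_coprime // !(coprime_sym (P i)).
  by rewrite (coprime_primorial_inv ca hil) (coprime_primorial_inv cag hil).
rewrite nring_eq // subn1.
have h4 : 4 <= P k.-1 by have := P_ge k.-1; lia.
rewrite -[4%R]/(4%:R)%R -natrB // -natrM ler_nat.
exact: key.
Qed.
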